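(* Let $\Sigma=(\mathbf{ex},\mathbf{fx},B)$ and $\Sigma'=(\mathbf{ex}',\mathbf{fx}',B')$ be seeds and $f:\mathcal A(\Sigma)\to\mathcal A(\Sigma')$ a rooted cluster morphism. Then: (1) the inclusion of the initial cluster of the image seed $f(\Sigma)$ into $\mathbf x'=\mathbf{ex}'\sqcup\mathbf{fx}'$ induces an injective rooted cluster morphism $\mathcal A(f(\Sigma))\to\mathcal A(\Sigma')$, so $\mathcal A(f(\Sigma))$ is a rooted cluster subalgebra of $\mathcal A(\Sigma')$; (2) if $f$ is ideal, then $f$ is the composition of a surjective rooted cluster morphism $\mathcal A(\Sigma)\to\mathcal A(f(\Sigma))$ and the injective rooted cluster morphism $\mathcal A(f(\Sigma))\to\mathcal A(\Sigma')$ of (1).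
   Context: A seed is a triple $\Sigma=(\mathbf{ex},\mathbf{fx},B)$ where $\mathbf{ex},\mathbf{fx}$ are disjoint finite or countable sets of indeterminates (exchangeable resp. frozen), $\mathbf x=\mathbf{ex}\sqcup\mathbf{fx}$, and $B=(b_{yz})_{y\in\mathbf x,z\in\mathbf{ex}}$ a locally finite integer matrix with skew-symmetrizable square part on $\mathbf{ex}\times\mathbf{ex}$. Mutation $\mu_x$ at $x\in\mathbf{ex}$: replace $x$ by $x'$ with $xx'=\prod_{b_{yx}>0}y^{b_{yx}}+\prod_{b_{yx}<0}y^{-b_{yx}}$, mutate $B$ by Fomin–Zelevinsky matrix mutation. $\mathcal A(\Sigma)$: $\Sigma$ with the $\mathbb Z$-subalgebra of $\mathbb Q(\mathbf x)$ generated by all cluster variables of seeds reachable by iterated mutations at exchangeable variables. A rooted cluster morphism $f:\mathcal A(\Sigma)\to\mathcal A(\Sigma')$ is a ring homomorphism with (CM1) $f(\mathbf{ex})\subseteq\mathbf{ex}'\sqcup\mathbb Z$, (CM2) $f(\mathbf{fx})\subseteq\mathbf x'\sqcup\mathbb Z$, (CM3) $f(\mu_{x_l}\circ\cdots\circ\mu_{x_1,\Sigma}(y))=\mu_{f(x_l)}\circ\cdots\circ\mu_{f(x_1),\Sigma'}(f(y))$ for all $y\in\mathbf x$ and all $\Sigma$-admissible mutation sequences whose image is $\Sigma'$-admissible (RHS read as $f(y)$ if $f(y)\in\mathbb Z$). Image seed: $f(\Sigma)=(\mathbf{ex}'\cap f(\mathbf{ex}),(\mathbf x'\cap f(\mathbf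 x))\setminus(\mathbf{ex}'\cap f(\mathbf{ex})),B'[\mathbf x'\cap f(\mathbf x)])$, where $B'[S]$ has rows indexed by $S$ and columns by $\mathbf{ex}'\cap f(\mathbf{ex})$. Always $\mathcal A(f(\Sigma))\subseteq f(\mathcal A(\Sigma))$; $f$ is ideal if equality holds. Rooted cluster subalgebra: source of an injective rooted cluster morphism. *)

(* Defs.v *)
From HB Require Import structures.
From mathcomp Require Import all_boot all_order all_algebra.
From Stdlib Require Import ClassicalEpsilon.
Set Implicit Arguments. Unset Strict Implicit. Unset Printing Implicit Defensive.
Import Order.TTheory GRing.Theory Num.Theory.
Local Open Scope ring_scope.

Definition asbool (P : Prop) : bool :=
  if excluded_middle_informative P then true else false.

(* The initial cluster variables are
   elements of F, and they are also used as the *labels* (positions) of the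
   cluster; mutation changes the variable sitting at a label but never the
   set of exchangeable / frozen labels. *)
Record seed (F : fieldType) := Seed {
  sex : pred F;
  sfx : pred F;
  sB  : F -> F -> int      (* b_{yz}, relevant for y in x, z in ex *)
}.

Section Seeds.
Variable F : fieldType.
Implicit Types (S : seed F).

Definition sx S : pred F := fun y => sex S y || sfx S y.

(* algebraic independence over Z of the elements of P, spelled out with
   integer polynomials given by distinct exponent vectors *)
Definition mono_eval (xs : seq F) (e : seq nat) : F :=
  \prod_(i < size xs) xs`_i ^+ nth 0%N e i.

Definition alg_indep (P : pred F) : Prop :=
  forall (xs : seq F) (terms : seq (int * seq nat)),
    uniq xs -> all P xs ->
    all (fun t => size t.2 == size xs) terms ->
    uniq (map snd terms) ->
    all (fun t => t.1 != 0) terms ->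
    terms != [::] ->
    \sum_(t <- terms) t.1%:~R * mono_eval xs t.2 != 0.

Definition countable_pred (P : pred F) : Prop :=
  exists g : F -> nat, {in P &, injective g}.

(* (ex, fx, B) is a seed of the field of rational functions Q(x) (realised
   inside F, where x is algebraically independent) *)
Definition is_seed S : Prop :=
  [/\ (forall y, ~~ (sex S y && sfx S y)),
      countable_pred (sx S),
      alg_indep (sx S),
      (forall z, sex S z -> exists s : seq F,
          forall y, sx S y -> sB S y z != 0 -> y \in s) &
      (exists d : F -> nat, (forall y, sex S y -> (0 < d y)%N) /\
         forall y z, sex S y -> sex S z ->
           (d y)%:Z * sB S y z = - ((d z)%:Z * sB S z y))].

(* labelled state of a seed reached by mutations: cluster and matrix *)
Record state := State { cl : F -> F; mat : F -> F -> int }.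

Definition init S : state := State id (sB S).

Definition col_supp S (st : state) (k : F) : seq F :=
  epsilon (inhabits [::])
    (fun s : seq F => forall j, sx S j -> mat st j k != 0 -> j \in s).

Definition Pplus S st k : F :=
  \prod_(j <- undup (col_supp S st k) | sx S j && (0 < mat st j k))
     cl st j ^+ absz (mat st j k).
Definition Pminus S st k : F :=
  \prod_(j <- undup (col_supp S st k) | sx S j && (mat st j k < 0))
     cl st j ^+ absz (mat st j k).

Definition mutate S (st : state) (k : F) : state :=
  State (fun j => if j == k then (Pplus S st k + Pminus S st k) / cl st k
                  else cl st j)
        (fun i j => if (i == k) || (j == k) then - mat st i j
                    else mat st i j +
                      (if (0 < mat st i k) && (0 < mat st k j)
                       then mat st i k * mat st k j
                       else if (mat st i k < 0) && (mat st k j < 0)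
                       then - (mat st i k * mat st k j) else 0)).

(* mutation along a label sequence [k_1; ...; k_l] (k_1 first) *)
Fixpoint mutseq S (st : state) (ks : seq F) : state :=
  if ks is k :: ks' then mutseq S (mutate S st k) ks' else st.

Fixpoint varseq S (st : state) (ks : seq F) : seq F :=
  if ks is k :: ks' then cl st k :: varseq S (mutate S st k) ks' else [::].

Definition clvar S (z : F) : Prop :=
  exists ks : seq F, all (sex S) ks /\
    exists2 y, sx S y & z = cl (mutseq S (init S) ks) y.

Inductive rca S : F -> Prop :=
| rca_var z : clvar S z -> rca S z
| rca_one : rca S 1
| rca_add a b : rca S a -> rca S b -> rca S (a + b)
| rca_opp a : rca S a -> rca S (- a)
| rca_mul a b : rca S a -> rca S b -> rca S (a * b).

Definition is_int (z : F) : Prop := exists n : int, z = n%:~R.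

End Seeds.

(* rooted cluster morphism A(S) -> A(S'), given by f on the ambient fields
   (only its restriction to A(S) matters) *)
Definition is_rcm (F F' : fieldType) (S : seed F) (S' : seed F')
    (f : F -> F') : Prop :=
  [/\ (forall a, rca S a -> rca S' (f a)),
      f 1 = 1,
      (forall a b, rca S a -> rca S b -> f (a + b) = f a + f b) &
      (forall a b, rca S a -> rca S b -> f (a * b) = f a * f b)] /\
  [/\ (forall y, sex S y -> sex S' (f y) \/ is_int (f y)),
      (forall y, sfx S y -> sx S' (f y) \/ is_int (f y)) &
      (forall (ks : seq F) (ks' : seq F'),
         all (sex S) ks -> all (sex S') ks' ->
         map f (varseq S (init S) ks) = varseq S' (init S') ks' ->
         forall y, sx S y ->
           (is_int (f y) -> f (cl (mutseq S (init S) ks) y) = f y) /\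
           (sx S' (f y) ->
              f (cl (mutseq S (init S) ks) y)
              = cl (mutseq S' (init S') ks') (f y)))].

Definition image_seed (F F' : fieldType) (S : seed F) (S' : seed F')
    (f : F -> F') : seed F' :=
  let iex := fun y => sex S' y && asbool (exists2 z, sex S z & f z = y) in
  let ix  := fun y => sx S' y && asbool (exists2 z, sx S z & f z = y) in
  Seed iex (fun y => ix y && ~~ iex y) (sB S').

Definition is_ideal (F F' : fieldType) (S : seed F) (S' : seed F')
    (f : F -> F') : Prop :=
  forall z, rca (image_seed S S' f) z <-> exists2 a, rca S a & f a = z.

(* Main.v *)
Require Import Defs.
From HB Require Import structures.
From mathcomp Require Import all_boot all_order all_algebra.
From mathcomp Require Import zify ring.
From Stdlib Require Import ClassicalEpsilon FunctionalExtensionality PropExtensionality.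
Set Implicit Arguments. Unset Strict Implicit. Unset Printing Implicit Defensive.
Import Order.TTheory GRing.Theory Num.Theory.
Local Open Scope ring_scope.

Section Terms.
Variable F : fieldType.
Definition term := (int * (F -> nat))%type.
Definition monoF (v : F -> F) (ls : seq F) (m : F -> nat) : F :=
  \prod_(x <- ls) v x ^+ m x.
Definition evalT v ls (l : seq term) : F :=
  \sum_(t <- l) t.1%:~R * monoF v ls t.2.
Definition keyT (ls : seq F) (m : F -> nat) : seq nat := map m ls.
Definition coefT ls (l : seq term) (s : seq nat) : int :=
  \sum_(t <- l | keyT ls t.2 == s) t.1.
Definition indep (v : F -> F) (D : pred F) : Prop :=
  forall ls l, uniq ls -> all D ls -> evalT v ls l = 0 ->
    forall s, coefT ls l s = 0.

Lemma keyE ls m1 m2 : (keyT ls m1 == keyT ls m2) = all (fun x => m1 x == m2 x) ls.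
Proof. by elim: ls => //= x ls IH; rewrite eqseq_cons IH. Qed.

Lemma keyP ls m1 m2 : reflect {in ls, m1 =1 m2} (keyT ls m1 == keyT ls m2).
Proof.
rewrite keyE; apply: (iffP allP) => H x Hx; first by apply/eqP/H.
by apply/eqP/H.
Qed.

Definition monoK v ls (s : seq nat) := monoF v ls (fun x => nth 0%N s (index x ls)).

Lemma monoF_key v ls m : monoF v ls m = monoK v ls (keyT ls m).
Proof.
rewrite /monoK /monoF; apply: eq_big_seq => x Hx.
by rewrite /keyT (nth_map x) ?index_mem // nth_index.
Qed.

Lemma partition_gen (I : Type) (K : eqType) (key : I -> K) (l : seq I) (h : I -> F)
  (r : seq K) : uniq r -> {subset map key l <= r} ->
  \sum_(i <- l) h i = \sum_(s <- r) \sum_(i <- l | key i == s) h i.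
Proof.
move=> ur; elim: l => [|a l IH] sub; first by rewrite big_nil big1 // => s _; rewrite big_nil.
rewrite big_cons IH; last by move=> x Hx; apply: sub; rewrite /= inE Hx orbT.
rewrite [in RHS](eq_bigr (fun s => (if key a == s then h a else 0) + \sum_(i <- l | key i == s) h i)); last first.
  by move=> s _; rewrite big_cons; case: ifP => _; rewrite ?add0r.
rewrite big_split /=; congr (_ + _).
rewrite -big_mkcond -big_filter.
rewrite (eq_filter (a2 := pred1 (key a))); last by move=> s /=; rewrite eq_sym.
by rewrite filter_pred1_uniq // ?big_seq1 //; apply: sub; rewrite /= inE eqxx.
Qed.

Lemma partition_seq (I : Type) (K : eqType) (key : I -> K) (l : seq I) (h : I -> F) :
  \sum_(i <- l) h i = \sum_(s <- undup (map key l)) \sum_(i <- l | key i == s) h i.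
Proof. by apply: partition_gen; rewrite ?undup_uniq // => x; rewrite mem_undup. Qed.

Definition tkey ls (t : term) := keyT ls t.2.

Lemma evalT_group v ls l : evalT v ls l =
  \sum_(s <- undup (map (tkey ls) l)) (coefT ls l s)%:~R * monoK v ls s.
Proof.
rewrite /evalT (partition_seq (tkey ls)); apply: eq_bigr => s _.
rewrite /coefT rmorph_sum big_distrl /=; apply: eq_bigr => t /eqP <-.
by rewrite monoF_key.
Qed.

Lemma evalT_zero v ls l : (forall s, coefT ls l s = 0) -> evalT v ls l = 0.
Proof. by move=> H; rewrite evalT_group big1 // => s _; rewrite H mul0r. Qed.

Lemma coefT_notin ls l s : s \notin map (tkey ls) l -> coefT ls l s = 0.
Proof.
rewrite /coefT; elim: l => [|t l IH]; first by rewrite big_nil.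
rewrite /= inE negb_or big_cons => /andP[ne /IH ->].
by rewrite eq_sym (negbTE ne).
Qed.

Lemma size_key ls m : size (keyT ls m) = size ls.
Proof. by rewrite /keyT size_map. Qed.

Lemma key_size ls l s : s \in map (tkey ls) l -> size s = size ls.
Proof.
elim: l => //= t l IH; rewrite inE => /orP[/eqP -> | /IH //].
by rewrite /tkey size_key.
Qed.

Lemma monoK_eval ls s : uniq ls -> monoK id ls s = mono_eval ls s.
Proof.
move=> u; rewrite /monoK /monoF /mono_eval (big_nth 0) big_mkord.
by apply: eq_bigr => i _; rewrite index_uniq.
Qed.

Lemma alg_indep_indep (D : pred F) : alg_indep D -> indep id D.
Proof.
move=> AI ls l uls Dls ev s; apply/eqP; apply: contraT => nz.
have sin : s \in map (tkey ls) l.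
  by apply: contraT => H; rewrite coefT_notin ?eqxx in nz.
set keys := undup (map (tkey ls) l).
set terms := [seq (coefT ls l s', s') | s' <- [seq s' <- keys | coefT ls l s' != 0]].
have msnd : [seq t.2 | t <- terms] = [seq s' <- keys | coefT ls l s' != 0].
  by rewrite /terms -map_comp map_id.
have := AI ls terms uls Dls.
have -> : all (fun t => size t.2 == size ls) terms.
  apply/allP => t /mapP[s' ].
  rewrite mem_filter mem_undup => /andP[_ /key_size H] ->.
  by rewrite /= H.
rewrite msnd filter_uniq ?undup_uniq //.
have -> : all (fun t => t.1 != 0) terms.
  by apply/allP => t /mapP[s' ]; rewrite mem_filter => /andP[H _] -> .
have -> : terms != [::].
  apply/eqP => E; have : s \in [seq t.2 | t <- terms].
    by rewrite msnd mem_filter nz mem_undup.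
  by rewrite E.
move=> /(_ isT isT isT isT); rewrite /terms big_map big_filter.
rewrite (eq_bigr (fun s' => (coefT ls l s')%:~R * monoK id ls s')); last first.
  by move=> s' _; rewrite monoK_eval.
rewrite big_mkcond /=.
rewrite (eq_bigr (fun s' => (coefT ls l s')%:~R * monoK id ls s')); last first.
  by move=> s' _; case: ifP => // /negbFE /eqP ->; rewrite mul0r.
by rewrite -evalT_group ev eqxx.
Qed.

Section BigAll.
Variable (V : zmodType) (I : Type).
Lemma big_all_eqr (P : pred I) (r : seq I) (Q : pred I) (h1 h2 : I -> V) :
  all P r -> (forall t, P t -> Q t -> h1 t = h2 t) ->
  \sum_(t <- r | Q t) h1 t = \sum_(t <- r | Q t) h2 t.
Proof.
move=> Hr H; elim: r Hr => [|a r IH] /=; first by rewrite !big_nil.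
move=> /andP[Pa Pr]; rewrite !big_cons IH //.
by case: ifP => // Qa; rewrite H.
Qed.
Lemma big_all_eql (P : pred I) (r : seq I) (Q1 Q2 : pred I) (h : I -> V) :
  all P r -> (forall t, P t -> Q1 t = Q2 t) ->
  \sum_(t <- r | Q1 t) h t = \sum_(t <- r | Q2 t) h t.
Proof.
move=> Hr H; elim: r Hr => [|a r IH] /=; first by rewrite !big_nil.
by move=> /andP[Pa Pr]; rewrite !big_cons IH // H.
Qed.
Lemma big_all0 (P : pred I) (r : seq I) (Q : pred I) (h : I -> V) :
  all P r -> (forall t, P t -> Q t = false) -> \sum_(t <- r | Q t) h t = 0.
Proof.
move=> Hr H; rewrite (@big_all_eql P r Q xpred0 h Hr) ?big_pred0 //.
Qed.
End BigAll.
Arguments big_all_eqr {V I P r Q h1 h2}.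
Arguments big_all_eql {V I P r Q1 Q2 h}.
Arguments big_all0 {V I P r Q h}.

Lemma monoF_add v ls m1 m2 :
  monoF v ls (fun x => (m1 x + m2 x)%N) = monoF v ls m1 * monoF v ls m2.
Proof. by rewrite /monoF -big_split /=; apply: eq_bigr => x _; rewrite exprD. Qed.

Lemma monoF0 v ls : monoF v ls (fun _ => 0%N) = 1.
Proof. by rewrite /monoF big1 // => x _; rewrite expr0. Qed.

Definition mulT (l1 l2 : seq term) : seq term :=
  [seq (a.1 * b.1, fun x => (a.2 x + b.2 x)%N) | a <- l1, b <- l2].
Definition powT (l : seq term) n := iter n (mulT l) [:: (1, fun _ => 0%N)].

Lemma evalT_mul v ls l1 l2 : evalT v ls (mulT l1 l2) = evalT v ls l1 * evalT v ls l2.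
Proof.
rewrite /evalT /mulT big_allpairs_dep big_distrl /=; apply: eq_bigr => a _.
rewrite big_distrr /=; apply: eq_bigr => b _.
by rewrite intrM monoF_add mulrACA.
Qed.

Lemma evalT_pow v ls l n : evalT v ls (powT l n) = evalT v ls l ^+ n.
Proof.
elim: n => [|n IH]; first by rewrite /evalT big_seq1 monoF0 mulr1.
by rewrite /powT iterS -/(powT l n) evalT_mul IH exprS.
Qed.

Lemma all_allpairs (A B C : Type) (f : A -> B -> C) (P : pred A) (Q : pred B) (R : pred C)
  l1 l2 : all P l1 -> all Q l2 -> (forall a b, P a -> Q b -> R (f a b)) ->
  all R [seq f a b | a <- l1, b <- l2].
Proof.
move=> H1 H2 H; elim: l1 H1 => //= a l1 IH /andP[Pa Pl]; rewrite all_cat IH // andbT.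
rewrite all_map; elim: l2 H2 {IH} => //= b l2 IH2 /andP[Qb Ql].
by rewrite IH2 // andbT H.
Qed.

Lemma powT_k0 (l : seq term) k n : all (fun t => t.2 k == 0%N) l ->
  all (fun t => t.2 k == 0%N) (powT l n).
Proof.
move=> H; elim: n => [|n IH] /=; first by [].
by apply: all_allpairs H IH _ => a b /eqP Ha /eqP Hb /=; rewrite Ha Hb.
Qed.

Lemma monoF_sub v (L1 L2 : seq F) m : uniq L1 -> uniq L2 -> {subset L1 <= L2} ->
  (forall x, x \in L2 -> x \notin L1 -> m x = 0%N) -> monoF v L2 m = monoF v L1 m.
Proof.
move=> u1 u2 sub H; rewrite /monoF (bigID (mem L1)) /=.
rewrite [X in _ * X]big1_seq ?mulr1; last first.
  by move=> x /andP[nx Hx]; rewrite H ?expr0.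
rewrite -big_filter; apply: perm_big; apply: uniq_perm; rewrite ?filter_uniq //.
by move=> x; rewrite mem_filter; case Hx: (x \in L1) => //=; rewrite sub.
Qed.

Lemma key_surj ls s : uniq ls -> size s = size ls ->
  s = keyT ls (fun x => nth 0%N s (index x ls)).
Proof.
move=> u sz; apply: (@eq_from_nth _ 0%N); first by rewrite size_key.
move=> i Hi; rewrite /keyT (nth_map 0); last by rewrite -sz.
by rewrite index_uniq // -sz.
Qed.

Lemma indep_nz v D k : indep v D -> D k -> v k != 0.
Proof.
move=> H Dk; apply/eqP => vk0.
have := H [:: k] [:: (1%:Z, fun x => nat_of_bool (x == k))] isT.
rewrite /= Dk /evalT /monoF !big_cons !big_nil /= eqxx expr1 vk0 mulr1 mulr0 addr0.
move=> /(_ isT erefl [:: 1%N]); rewrite /coefT big_cons big_nil /tkey /keyT /= eqxx.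
by [].
Qed.

Lemma evalT_flatten v L (ll : seq (seq term)) :
  evalT v L (flatten ll) = \sum_(l' <- ll) evalT v L l'.
Proof. by rewrite /evalT big_flatten. Qed.

Lemma coefT_flatten L (ll : seq (seq term)) s :
  coefT L (flatten ll) s = \sum_(l' <- ll) coefT L l' s.
Proof. by rewrite /coefT big_flatten. Qed.

Lemma evalT_shift v L (l' : seq term) c mm :
  evalT v L [seq (u.1 * c, fun x => (u.2 x + mm x)%N) | u <- l'] =
  evalT v L l' * (c%:~R * monoF v L mm).
Proof.
rewrite /evalT big_map big_distrl; apply: eq_bigr => u _ /=.
by rewrite monoF_add intrM mulrACA.
Qed.

Lemma coefT_shift L (l' : seq term) c mm s :
  coefT L [seq (u.1 * c, fun x => (u.2 x + mm x)%N) | u <- l'] s =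
  \sum_(u <- l' | keyT L (fun x => (u.2 x + mm x)%N) == s) u.1 * c.
Proof. by rewrite /coefT big_map. Qed.

Lemma max_all (l : seq term) k : all (fun t => t.2 k <= \max_(u <- l) u.2 k)%N l.
Proof.
elim: l => //= t l IH; rewrite big_cons leq_maxl /=.
by apply: sub_all IH => u /= H; apply: leq_trans H (leq_maxr _ _).
Qed.

Lemma indep_mutate v D k (PT : seq term) (Lp : seq F) (Pv : F) :
  indep v D -> D k -> uniq Lp -> all D Lp ->
  all (fun t => t.2 k == 0%N) PT ->
  (forall L, uniq L -> {subset Lp <= L} -> evalT v L PT = Pv) ->
  Pv != 0 ->
  indep (fun x => if x == k then Pv / v k else v x) D.
Proof.
move=> Hind Dk uLp DLp PTk HP Pnz.
set v' := fun x => _.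
have vk : v k != 0 by apply: indep_nz Hind Dk.
move=> ls l uls Dls ev s.
case kls: (k \in ls); last first.
  apply: Hind uls Dls _ s; rewrite -ev; apply: eq_bigr => t _; congr (_ * _).
  apply: eq_big_seq => x Hx; rewrite /v'; case: eqP => // E.
  by rewrite -E Hx in kls.
suff Hm : forall m, coefT ls l (keyT ls m) = 0.
  case: (eqVneq (size s) (size ls)) => [sz|nsz]; first by rewrite (key_surj uls sz).
  by apply: coefT_notin; apply: contra nsz => /key_size ->.
move=> m; set j := m k; set N := (\max_(u <- l) u.2 k)%N.
have lN := max_all l k; rewrite -/N in lN.
case: (ltnP N j) => [Nj | jN].
  rewrite /coefT; apply: (big_all0 lN) => t /= tN; apply/negbTE; apply: contraTN Nj.
  by move=> /keyP /(_ k kls) E; rewrite -leqNgt /j -E.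
set L := undup (ls ++ Lp).
have uL : uniq L := undup_uniq _.
have DL : all D L.
  apply/allP => x; rewrite mem_undup mem_cat => /orP[] H.
    by move/allP: Dls; apply.
  by move/allP: DLp; apply.
have lsL : {subset ls <= L} by move=> x Hx; rewrite mem_undup mem_cat Hx.
have LpL : {subset Lp <= L} by move=> x Hx; rewrite mem_undup mem_cat Hx orbT.
have kL : k \in L by apply: lsL.
have HPL := HP L uL LpL.
have pk : forall n, all (fun u => u.2 k == 0%N) (powT PT n) by move=> n; apply: powT_k0.
pose zk (t : term) := fun x => if x == k then 0%N else if x \in ls then t.2 x else 0%N.
pose mk (t : term) := fun x => if x == k then (N - t.2 k)%N else if x \in ls then t.2 x else 0%N.
have monoL_mk : forall t : term, (t.2 k <= N)%N ->
    Pv ^+ (t.2 k) * monoF v L (mk t) = v k ^+ N * monoF v' ls t.2.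
  move=> t tN.
  rewrite (@monoF_sub v ls L) //; last first.
    move=> x _ xn; rewrite /mk (negbTE xn); case: eqP => // E.
    by rewrite E kls in xn.
  rewrite /monoF !(bigD1_seq k) //= /mk /v' eqxx.
  rewrite [in RHS]big_seq_cond [in LHS]big_seq_cond.
  rewrite (eq_bigr (fun x => v' x ^+ t.2 x)); last first.
    by move=> x /andP[Hx xk]; rewrite (negbTE xk) Hx /v' (negbTE xk).
  rewrite -big_seq_cond -/v'.
  set Q := \prod_(x <- ls | x != k) _.
  rewrite -[in RHS](subnK tN) exprD expr_div_n.
  have ve : v k ^+ t.2 k != 0 by rewrite expf_neq0.
  set a := v k ^+ (N - _); set b := v k ^+ t.2 k; set c := Pv ^+ _.
  by rewrite -[RHS]mulrA [b * _]mulrA [b * _]mulrC (divfK ve) mulrCA.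
pose R := flatten [seq [seq (u.1 * t.1, fun x => (u.2 x + mk t x)%N) | u <- powT PT (t.2 k)] | t <- l].
have evR : evalT v L R = v k ^+ N * evalT v' ls l.
  rewrite evalT_flatten big_map [in RHS]/evalT big_distrr /=.
  apply: (big_all_eqr lN) => t tN _.
  by rewrite evalT_shift evalT_pow HPL mulrCA monoL_mk // mulrCA.
have HR : forall s', coefT L R s' = 0.
  by apply: Hind uL DL _; rewrite evR ev mulr0.
pose A := flatten [seq [seq (u.1 * t.1, fun x => (u.2 x + zk t x)%N) | u <- powT PT j] | t <- l & t.2 k == j].
have coefA : forall m', coefT L A (keyT L m') = 0.
  move=> m'; rewrite coefT_flatten big_map big_filter.
  case m'k: (m' k == 0%N); last first.
    apply: big1 => t _; rewrite coefT_shift.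
    apply: (big_all0 (pk j)) => u /eqP uk; apply/negbTE; apply/keyP => /(_ k kL).
    by rewrite /zk eqxx uk => E; rewrite -E eqxx in m'k.
  pose m'' := fun x => if x == k then (N - j)%N else m' x.
  rewrite -[RHS](HR (keyT L m'')) coefT_flatten big_map [in LHS]big_mkcond /=.
  apply: esym; apply: (big_all_eqr lN) => t tN _.
  rewrite !coefT_shift.
  case: eqP => tj.
    rewrite tj; apply: (big_all_eql (pk j)) => u /eqP uk; rewrite !keyE.
    apply: eq_in_all => x xL /=; rewrite /mk /zk /m''.
    case: (eqVneq x k) => [->|xk] //=.
    by rewrite uk tj !add0n (eqP m'k) !eqxx.
  apply: (big_all0 (pk _)) => u /eqP uk; apply/negbTE; apply/keyP => /(_ k kL).
  rewrite /mk /m'' eqxx uk add0n => E; apply: tj.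
  have := E; clear -tN jN; lia.
pose l0 := [seq (t.1, zk t) | t <- l & t.2 k == j].
have evA : evalT v L A = Pv ^+ j * evalT v ls l0.
  rewrite evalT_flatten big_map big_filter [in RHS]/evalT big_map big_filter big_distrr /=.
  apply: eq_bigr => t _; rewrite evalT_shift evalT_pow HPL.
  rewrite (@monoF_sub v ls L) //.
  move=> x _ xn; rewrite /zk (negbTE xn); by case: eqP.
have evA0 : evalT v L A = 0.
  apply: evalT_zero => s'.
  case: (eqVneq (size s') (size L)) => [sz|nsz]; first by rewrite (key_surj uL sz).
  by apply: coefT_notin; apply: contra nsz => /key_size ->.
have ev0 : evalT v ls l0 = 0.
  move: evA0; rewrite evA => /eqP; rewrite mulf_eq0 expf_eq0 (negbTE Pnz) andbF /=.
  by move/eqP.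
pose mz := fun x => if x == k then 0%N else m x.
have := Hind ls l0 uls Dls ev0 (keyT ls mz).
rewrite /coefT big_map big_filter_cond => H.
rewrite /coefT -[RHS]H.
apply: eq_bigl => t /=; apply/idP/idP.
  move=> /keyP E; have tj : t.2 k == j by rewrite E.
  rewrite tj /=; apply/keyP => x xls; rewrite /zk /mz; case: eqP => // _.
  by rewrite xls E.
move=> /andP[/eqP tj /keyP E]; apply/keyP => x xls.
case: (eqVneq x k) => [->|xk]; first by rewrite tj.
by have := E x xls; rewrite /zk /mz (negbTE xk) xls.
Qed.

End Terms.

Lemma asboolP (P : Prop) : reflect P (asbool P).
Proof. by rewrite /asbool; case: excluded_middle_informative => H; constructor. Qed.

Section SeedTh.
Variable F : fieldType.
Variable S : seed F.
Variable d : F -> nat.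
Hypothesis dpos : forall y, sex S y -> (0 < d y)%N.

Definition skew (st : state F) := forall y z, sex S y -> sex S z ->
  (d y)%:Z * mat st y z = - ((d z)%:Z * mat st z y).

Lemma skew_diag st k : skew st -> sex S k -> mat st k k = 0.
Proof.
move=> H Hk; have := H k k Hk Hk.
have dk : (d k)%:Z != 0 by rewrite eqz_nat -lt0n dpos.
move=> /eqP; rewrite -subr_eq0 opprK -mulr2n mulrn_eq0 /= mulf_eq0 (negbTE dk) /=.
by move/eqP.
Qed.

Lemma sign_skew (a b : int) (da db : nat) : (0 < da)%N -> (0 < db)%N ->
  da%:Z * a = - (db%:Z * b) -> (0 < a) = (b < 0).
Proof.
move=> ha hb E.
have : (0 < da%:Z * a) = (0 < a) by rewrite pmulr_rgt0 // ltz_nat.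
by rewrite E oppr_gt0 pmulr_rlt0 ?ltz_nat // => ->.
Qed.

Lemma skew_mutate st k : skew st -> sex S k -> skew (mutate S st k).
Proof.
move=> H Hk y z Hy Hz /=.
case: (boolP ((y == k) || (z == k))) => yz.
  by rewrite (orbC (z == k)) yz !mulrN (H y z Hy Hz) !opprK.
rewrite (orbC (z == k)) (negbTE yz).
move: yz; rewrite negb_or => /andP[yk zk].
rewrite !mulrDr (H y z Hy Hz) opprD; congr (_ + _).
have hy := dpos Hy; have hz := dpos Hz; have hk := dpos Hk.
have e1 := H y k Hy Hk; have e2 := H k z Hk Hz.
have s1 := sign_skew hy hk e1; have s2 := sign_skew hk hz e2.
have s1' : (mat st y k < 0) = (0 < mat st k y).
  by rewrite (sign_skew hk hy (H k y Hk Hy)).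
have s2' : (mat st k z < 0) = (0 < mat st z k).
  by rewrite (sign_skew hz hk (H z k Hz Hk)).
have key : (d y)%:Z * (mat st y k * mat st k z) = (d z)%:Z * (mat st z k * mat st k y).
  apply: (@mulfI _ (d k)%:Z); first by rewrite eqz_nat -lt0n.
  have -> : (d k)%:Z * ((d y)%:Z * (mat st y k * mat st k z)) =
            ((d y)%:Z * mat st y k) * ((d k)%:Z * mat st k z) by ring.
  rewrite e1 e2; ring.
rewrite s1 s2 s1' s2'.
case C1: ((mat st k y < 0) && (mat st z k < 0)).
  move/andP: C1 => [a b]; rewrite (lt_gtF b) a b /= key mulrN opprK.
  by rewrite mulrC [mat st z k * _]mulrC.
case C2: ((0 < mat st k y) && (0 < mat st z k)).
  move/andP: C2 => [a b]; rewrite a b /= mulrN key.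
  by rewrite [mat st z k * _]mulrC.
rewrite mulr0 andbC C2 andbC C1 mulr0 oppr0 //.
Qed.

Definition Lp (st : state F) k := [seq x <- undup (col_supp S st k) | sx S x].
Definition mplus (st : state F) k : F -> nat :=
  fun x => if (x \in Lp st k) && (0 < mat st x k) then absz (mat st x k) else 0%N.
Definition mminus (st : state F) k : F -> nat :=
  fun x => if (x \in Lp st k) && (mat st x k < 0) then absz (mat st x k) else 0%N.
Definition PT (st : state F) k : seq (term F) := [:: (1, mplus st k); (1, mminus st k)].

Lemma uniq_Lp st k : uniq (Lp st k).
Proof. by rewrite filter_uniq ?undup_uniq. Qed.

Lemma all_Lp st k : all (sx S) (Lp st k).
Proof. by apply: filter_all. Qed.

Lemma monoF_plus st k L : uniq L -> {subset Lp st k <= L} ->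
  monoF (cl st) L (mplus st k) = Pplus S st k.
Proof.
move=> uL sub; rewrite (@monoF_sub _ _ (Lp st k) L) ?uniq_Lp //; last first.
  by move=> x _ xn; rewrite /mplus (negbTE xn).
rewrite /monoF /Pplus -big_filter_cond -/(Lp st k) [RHS]big_mkcond.
apply: eq_big_seq => x Hx; rewrite /mplus Hx /=.
by case: ifP.
Qed.

Lemma monoF_minus st k L : uniq L -> {subset Lp st k <= L} ->
  monoF (cl st) L (mminus st k) = Pminus S st k.
Proof.
move=> uL sub; rewrite (@monoF_sub _ _ (Lp st k) L) ?uniq_Lp //; last first.
  by move=> x _ xn; rewrite /mminus (negbTE xn).
rewrite /monoF /Pminus -big_filter_cond -/(Lp st k) [RHS]big_mkcond.
apply: eq_big_seq => x Hx; rewrite /mminus Hx /=.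
by case: ifP.
Qed.

Lemma evalT_PT st k L : uniq L -> {subset Lp st k <= L} ->
  evalT (cl st) L (PT st k) = Pplus S st k + Pminus S st k.
Proof.
move=> uL sub; rewrite /evalT !big_cons big_nil /= !mul1r addr0.
by rewrite monoF_plus ?monoF_minus.
Qed.

Lemma PT_k0 st k : mat st k k = 0 -> all (fun t => t.2 k == 0%N) (PT st k).
Proof. by move=> H; rewrite /= /mplus /mminus H ltxx !andbF. Qed.

Lemma Pv_nz st k : indep (cl st) (sx S) -> Pplus S st k + Pminus S st k != 0.
Proof.
move=> Hind; apply/eqP => E.
have := Hind (Lp st k) (PT st k) (uniq_Lp st k) (all_Lp st k).
rewrite evalT_PT ?uniq_Lp // E => /(_ erefl (keyT (Lp st k) (mplus st k))).
rewrite /coefT !big_cons big_nil /= eqxx.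
by case: ifP.
Qed.

Definition InvS st := indep (cl st) (sx S) /\ skew st.

Lemma InvS_mutate st k : InvS st -> sex S k -> InvS (mutate S st k).
Proof.
move=> [Hind Hsk] Hk; split; last by apply: skew_mutate.
have kk := skew_diag Hsk Hk.
apply: (@indep_mutate _ (cl st) (sx S) k (PT st k) (Lp st k)) => //.
- by rewrite /sx Hk.
- exact: uniq_Lp.
- exact: all_Lp.
- exact: PT_k0.
- by move=> L uL sub; apply: evalT_PT.
- exact: Pv_nz.
Qed.

Lemma InvS_mutseq st ks : InvS st -> all (sex S) ks -> InvS (mutseq S st ks).
Proof.
elim: ks st => //= k ks IH st H /andP[Hk Hks]; apply: IH => //.
exact: InvS_mutate.
Qed.

Lemma InvS_inj st a b : InvS st -> sx S a -> sx S b -> cl st a = cl st b -> a = b.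
Proof.
move=> [Hind _] Ha Hb E; apply/eqP; apply: contraT => ab.
have := Hind [:: a; b] [:: (1%:Z, fun x => nat_of_bool (x == a)); (-1, fun x => nat_of_bool (x == b))].
rewrite /= inE (negbTE ab) Ha Hb /evalT /monoF !big_cons !big_nil /=.
rewrite eqxx (eq_sym b a) (negbTE ab) E.
have m1 : (-1)%:~R = -1 :> F by rewrite rmorphN1.
rewrite eqxx m1 mulN1r /= !expr0 !expr1 !mulr1 !mul1r addr0 subrr.
move=> /(_ isT isT erefl [:: 1%N; 0%N]).
by rewrite /coefT !big_cons big_nil /keyT /= eqxx (eq_sym b a) (negbTE ab).
Qed.

Lemma varseq_inj st ks ks' : InvS st -> all (sex S) ks -> all (sex S) ks' ->
  varseq S st ks = varseq S st ks' -> ks = ks'.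
Proof.
elim: ks st ks' => [|k ks IH] st [|k' ks'] //= H /andP[Hk Hks] /andP[Hk' Hks'] [E1 E2].
have kk : k = k'.
  by apply: (InvS_inj H) => //; rewrite /sx ?Hk ?Hk'.
subst k'; congr (_ :: _); apply: (IH (mutate S st k)) => //.
exact: InvS_mutate.
Qed.

End SeedTh.

Lemma monoF_delta (K : fieldType) (L : seq K) y n : uniq L -> y \in L ->
  monoF id L (fun x => if x == y then n else 0%N) = y ^+ n.
Proof.
move=> uL yL; rewrite /monoF (bigD1_seq y) //= eqxx big1 ?mulr1 //.
by move=> x /negbTE ->; rewrite expr0.
Qed.

Lemma prod_rep (K : fieldType) (I : eqType) (r : seq I) (P : pred I) (w : I -> K)
  (n : I -> nat) (L : seq K) (X : K) : uniq L ->
  (forall i, i \in r -> P i -> (w i \in L) \/ is_int (w i)) ->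
  (forall i, i \in r -> P i -> w i != X) ->
  exists c : int, exists m : K -> nat,
    \prod_(i <- r | P i) w i ^+ n i = c%:~R * monoF id L m /\ m X = 0%N.
Proof.
move=> uL; elim: r => [|a r IH] H1 H2.
  by exists 1, (fun _ => 0%N); rewrite big_nil monoF0 mulr1.
have H1' : forall i, i \in r -> P i -> (w i \in L) \/ is_int (w i).
  by move=> i Hi; apply: H1; rewrite inE Hi orbT.
have H2' : forall i, i \in r -> P i -> w i != X.
  by move=> i Hi; apply: H2; rewrite inE Hi orbT.
have [c [m [E mX]]] := IH H1' H2'.
rewrite big_cons; case Pa: (P a); last by exists c, m.
have aa : a \in a :: r by rewrite inE eqxx.
case: (H1 a aa Pa) => [aL | [z az]].
  exists c, (fun x => (m x + if x == w a then n a else 0)%N); split.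
    by rewrite monoF_add monoF_delta // E mulrCA [monoF _ _ _ * _]mulrC.
  by rewrite mX add0n; case: eqP => // E'; move: (H2 a aa Pa); rewrite E' eqxx.
exists (z ^+ n a * c), m; split => //.
by rewrite E az intrM rmorphXn mulrA.
Qed.

Section Img.
Variables (F F' : fieldType) (S : seed F) (S' : seed F') (f : F -> F').
Notation T := (image_seed S S' f).

Lemma sexT y : sex T y = sex S' y && asbool (exists2 z, sex S z & f z = y).
Proof. by []. Qed.

Lemma sxT y : sx T y = sx S' y && asbool (exists2 z, sx S z & f z = y).
Proof.
rewrite /sx /= /image_seed /=.
case E: (sex S' y && asbool (exists2 z, sex S z & f z = y)) => /=.
  move/andP: E => [-> /asboolP [z Hz fz]] /=; apply/esym/asboolP.
  by exists z => //; rewrite /sx Hz.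
by rewrite andbT.
Qed.

Lemma sexT_sex y : sex T y -> sex S' y.
Proof. by rewrite sexT => /andP[]. Qed.

Lemma sxT_sx y : sx T y -> sx S' y.
Proof. by rewrite sxT => /andP[]. Qed.

Definition IT (st : state F') := forall k j, sex T k -> sx S' j -> ~~ sx T j -> mat st j k = 0.

Lemma col_supp_agree st k : IT st -> sex T k -> col_supp T st k = col_supp S' st k.
Proof.
move=> H Hk; rewrite /col_supp; congr (epsilon _ _).
apply: functional_extensionality => s; apply: propositional_extensionality.
split => Hs j Hj Hm.
  case Tj: (sx T j); first by apply: Hs.
  by rewrite (H k j Hk Hj (negbT Tj)) eqxx in Hm.
by apply: Hs => //; apply: sxT_sx.
Qed.

Lemma filter_agree st k (Q : int -> bool) : IT st -> sex T k -> ~~ Q 0 ->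
  forall j, (sx T j && Q (mat st j k)) = (sx S' j && Q (mat st j k)).
Proof.
move=> H Hk nQ j; case Tj: (sx T j).
  by rewrite (sxT_sx Tj).
case S'j: (sx S' j) => //=.
by rewrite (H k j Hk S'j (negbT Tj)) (negbTE nQ).
Qed.

Lemma mutate_agree st k : IT st -> sex T k -> mutate T st k = mutate S' st k.
Proof.
move=> H Hk.
have E1 : Pplus T st k = Pplus S' st k.
  rewrite /Pplus col_supp_agree //; apply: eq_bigl => j.
  exact: (filter_agree (Q := fun b => 0 < b)).
have E2 : Pminus T st k = Pminus S' st k.
  rewrite /Pminus col_supp_agree //; apply: eq_bigl => j.
  exact: (filter_agree (Q := fun b => b < 0)).
by rewrite /mutate E1 E2.
Qed.

Lemma IT_mutate st k : IT st -> sex T k -> IT (mutate S' st k).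
Proof.
move=> H Hk k' j Hk' Hj nj /=.
have jk : (j == k) = false.
  apply/negbTE; apply: contra nj => /eqP ->; by rewrite /sx Hk.
rewrite jk /=; case: eqP => [_|_]; first by rewrite (H k' j Hk' Hj nj) oppr0.
by rewrite (H k' j Hk' Hj nj) (H k j Hk Hj nj) ltxx /= add0r.
Qed.

Lemma mutseq_agree st ks : IT st -> all (sex T) ks ->
  mutseq T st ks = mutseq S' st ks /\ varseq T st ks = varseq S' st ks.
Proof.
elim: ks st => [|k ks IH] st H //= /andP[Hk Hks].
rewrite mutate_agree //; have [-> ->] := IH _ (IT_mutate H Hk) Hks.
by [].
Qed.

End Img.

Lemma rca_init (K : fieldType) (S0 : seed K) y : sx S0 y -> rca S0 y.
Proof. by move=> Hy; apply: rca_var; exists [::]; split => //; exists y. Qed.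

Section Hom.
Variables (F F' : fieldType) (S : seed F) (S' : seed F') (f : F -> F').
Hypothesis f1 : f 1 = 1.
Hypothesis fmul : forall a b, rca S a -> rca S b -> f (a * b) = f a * f b.

Lemma f_exp x n : rca S x -> rca S (x ^+ n) /\ f (x ^+ n) = f x ^+ n.
Proof.
move=> Hx; elim: n => [|n [IH1 IH2]]; first by rewrite !expr0 f1; split => //; apply: rca_one.
by rewrite !exprS; split; [apply: rca_mul | rewrite fmul // IH2].
Qed.

Lemma f_prod (r : seq F) (P : pred F) (w : F -> F) (n : F -> nat) :
  (forall i, P i -> rca S (w i)) ->
  rca S (\prod_(i <- r | P i) w i ^+ n i) /\
  f (\prod_(i <- r | P i) w i ^+ n i) = \prod_(i <- r | P i) f (w i) ^+ n i.
Proof.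
move=> H; elim: r => [|a r [IH1 IH2]]; first by rewrite !big_nil f1; split => //; apply: rca_one.
rewrite !big_cons; case Pa: (P a) => //.
have [E1 E2] := f_exp (n a) (H a Pa).
by split; [apply: rca_mul | rewrite fmul // E2 IH2].
Qed.
End Hom.

Lemma keyne (K : fieldType) (L : seq K) (m1 m2 : K -> nat) x :
  x \in L -> m1 x != m2 x -> (keyT L m1 == keyT L m2) = false.
Proof. by move=> xL ne; apply/negbTE; apply: contra ne => /keyP /(_ x xL) ->. Qed.

Section Key.
Variables (F F' : fieldType) (S : seed F) (S' : seed F') (f : F -> F').
Notation T := (image_seed S S' f).

Lemma key_init : is_seed S -> is_seed S' -> is_rcm S S' f -> IT S S' f (init S').
Proof.
move=> [_ _ AIS _ _] [_ _ AIS' LF' _] [[Hrca f1 fadd fmul] [CM1 CM2 CM3]].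
move=> k j HkT Hj njT /=.
apply/eqP; apply: contraT => bnz.
move/andP: HkT => [Hk /asboolP [z Hz fz]].
have nimg : forall i, sx S i -> f i != j.
  move=> i Hi; apply/eqP => E; move: njT; rewrite sxT Hj /=.
  by move/asboolP; apply; exists i.
have IndS := alg_indep_indep AIS; have IndS' := alg_indep_indep AIS'.
have sxz : sx S z by rewrite /sx Hz.
have sxk : sx S' k by rewrite /sx Hk.
have z0 : z != 0 := indep_nz IndS sxz.
have k0 : k != 0 := indep_nz IndS' sxk.
set st := init S; set st' := init S'.
set PS := Pplus S st z + Pminus S st z.
set PS' := Pplus S' st' k + Pminus S' st' k.
have zp : cl (mutate S st z) z = PS / z by rewrite /= eqxx.
have rz : rca S z := rca_init sxz.
have rzp : rca S (cl (mutate S st z) z).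
  by apply: rca_var; exists [:: z]; split; [rewrite /= Hz | exists z].
have [_ Hfzp] := CM3 [:: z] [:: k] ltac:(by rewrite /= Hz) ltac:(by rewrite /= Hk)
   ltac:(by rewrite /= fz) z sxz.
have fzp : f (cl (mutate S st z) z) = PS' / k.
  by rewrite /= in Hfzp; rewrite Hfzp fz //= eqxx.
have rP : forall i, sx S i && (0 < mat st i z) -> rca S (id i).
  by move=> i /andP[Hi _]; apply: rca_init.
have rM : forall i, sx S i && (mat st i z < 0) -> rca S (id i).
  by move=> i /andP[Hi _]; apply: rca_init.
have [rPp fPp] := f_prod f1 fmul (undup (col_supp S st z)) (fun i => absz (mat st i z)) rP.
have [rPm fPm] := f_prod f1 fmul (undup (col_supp S st z)) (fun i => absz (mat st i z)) rM.
have fPS : f PS = PS'.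
  have : f (z * cl (mutate S st z) z) = f z * f (cl (mutate S st z) z) by apply: fmul.
  rewrite fzp fz zp [z * _]mulrC divfK // [k * _]mulrC divfK //.
have ePp : Pplus S st z = \prod_(i <- undup (col_supp S st z) | sx S i && (0 < mat st i z)) id i ^+ absz (mat st i z) by [].
have ePm : Pminus S st z = \prod_(i <- undup (col_supp S st z) | sx S i && (mat st i z < 0)) id i ^+ absz (mat st i z) by [].
move: fPS; rewrite /PS ePp ePm (fadd _ _ rPp rPm) fPp fPm => fPS.
set L := [seq x <- undup ([seq f i | i <- undup (col_supp S st z) & sx S i] ++ Lp S' st' k) | sx S' x].
have uL : uniq L by rewrite filter_uniq ?undup_uniq.
have aL : all (sx S') L by apply: filter_all.
have LpL : {subset Lp S' st' k <= L}.
  move=> x Hx; rewrite mem_filter mem_undup mem_cat Hx orbT andbT.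
  by move: Hx; rewrite mem_filter => /andP[].
have jLp : j \in Lp S' st' k.
  rewrite mem_filter Hj mem_undup /=.
  have := @epsilon_spec _ (inhabits [::]) (fun s : seq F' => forall j, sx S' j -> mat st' j k != 0 -> j \in s) (LF' k Hk).
  by move=> /(_ j Hj bnz).
have jL := LpL _ jLp.
have Hw : forall i, i \in undup (col_supp S st z) -> sx S i -> (f (id i) \in L) \/ is_int (f (id i)).
  move=> i Hi Si.
  have Hc : sx S' (f i) \/ is_int (f i).
    move: Si; rewrite /sx; case/orP => Hi'.
      by case: (CM1 i Hi') => H; [left; rewrite /sx H | right].
    exact: CM2.
  case: Hc => [H|H]; [left|by right].
  rewrite mem_filter H mem_undup mem_cat /=; apply/orP; left.
  by apply: map_f; rewrite mem_filter Si.
have [c1 [m1 [E1 m1j]]] := @prod_rep _ _ (undup (col_supp S st z)) (fun i => sx S i && (0 < mat st i z))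
  (fun i => f (id i)) (fun i => absz (mat st i z)) L j uL
  ltac:(by move=> i Hi /andP[Si _]; apply: Hw)
  ltac:(by move=> i Hi /andP[Si _]; apply: nimg).
have [c2 [m2 [E2 m2j]]] := @prod_rep _ _ (undup (col_supp S st z)) (fun i => sx S i && (mat st i z < 0))
  (fun i => f (id i)) (fun i => absz (mat st i z)) L j uL
  ltac:(by move=> i Hi /andP[Si _]; apply: Hw)
  ltac:(by move=> i Hi /andP[Si _]; apply: nimg).
have ev : evalT id L [:: (c1, m1); (c2, m2); (-1, mplus S' st' k); (-1, mminus S' st' k)] = 0.
  rewrite /evalT !big_cons big_nil /= addr0.
  have mp := monoF_plus uL LpL; have mm := monoF_minus uL LpL.
  have m1r : (-1)%:~R = -1 :> F' by rewrite rmorphN1.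
  have H : c1%:~R * monoF id L m1 + c2%:~R * monoF id L m2 = PS'.
    by rewrite -E1 -E2; exact: fPS.
  rewrite m1r !mulN1r addrA H /PS'.
  rewrite -[monoF id L (mplus S' st' k)]/(monoF (cl st') L (mplus S' st' k)) mp.
  rewrite -[monoF id L (mminus S' st' k)]/(monoF (cl st') L (mminus S' st' k)) mm.
  by rewrite -opprD subrr.
have Hc := IndS' L _ uL aL ev.
have bnz' : mat st' j k != 0 := bnz.
case: (ltrgtP (mat st' j k) 0) => sb; last by rewrite sb eqxx in bnz'.
- have := Hc (keyT L (mminus S' st' k)).
  have e1 : mminus S' st' k j = absz (mat st' j k) by rewrite /mminus jLp sb.
  have e2 : mplus S' st' k j = 0%N by rewrite /mplus jLp ltNge (ltW sb).
  have ne : (0 != absz (mat st' j k))%N by rewrite eq_sym absz_eq0.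
  have k1 : (keyT L m1 == keyT L (mminus S' st' k)) = false by apply: (keyne jL); rewrite m1j e1.
  have k2 : (keyT L m2 == keyT L (mminus S' st' k)) = false by apply: (keyne jL); rewrite m2j e1.
  have k3 : (keyT L (mplus S' st' k) == keyT L (mminus S' st' k)) = false by apply: (keyne jL); rewrite e2 e1.
  by rewrite /coefT !big_cons big_nil /= k1 k2 k3 eqxx.
- have := Hc (keyT L (mplus S' st' k)).
  have e1 : mplus S' st' k j = absz (mat st' j k) by rewrite /mplus jLp sb.
  have e2 : mminus S' st' k j = 0%N by rewrite /mminus jLp ltNge (ltW sb).
  have ne : (0 != absz (mat st' j k))%N by rewrite eq_sym absz_eq0.
  have k1 : (keyT L m1 == keyT L (mplus S' st' k)) = false by apply: (keyne jL); rewrite m1j e1.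
  have k2 : (keyT L m2 == keyT L (mplus S' st' k)) = false by apply: (keyne jL); rewrite m2j e1.
  have k3 : (keyT L (mminus S' st' k) == keyT L (mplus S' st' k)) = false by apply: (keyne jL); rewrite e2 e1.
  by rewrite /coefT !big_cons big_nil /= k1 k2 k3 eqxx.
Qed.
End Key.

Lemma not_int (K : fieldType) (D : pred K) y : indep id D -> D y -> ~ is_int y.
Proof.
move=> Hind Dy [n E].
have := Hind [:: y] [:: (1%:Z, fun x => nat_of_bool (x == y)); (- n, fun _ => 0%N)] isT.
rewrite /= Dy /evalT /monoF !big_cons !big_nil /= eqxx.
have ev : 1%:~R * (y ^+ 1 * 1) + ((- n)%:~R * (y ^+ 0 * 1) + 0) = 0 :> K.
  by rewrite expr0 expr1 !mulr1 mul1r addr0 intrN E subrr.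
move=> /(_ isT ev [:: 1%N]).
by rewrite /coefT !big_cons big_nil /keyT /= eqxx.
Qed.

Unset Implicit Arguments.
Theorem mainTheorem5 (F F' : fieldType) (S : seed F) (S' : seed F')
    (f : F -> F') :
  is_seed S -> is_seed S' -> is_rcm S S' f ->
  (is_rcm (image_seed S S' f) S' id /\
   (forall a b, rca (image_seed S S' f) a -> rca (image_seed S S' f) b ->
      id a = id b -> a = b)) /\
  (is_ideal S S' f ->
   exists g : F -> F',
     [/\ is_rcm S (image_seed S S' f) g,
         (forall b, rca (image_seed S S' f) b -> exists2 a, rca S a & g a = b) &
         (forall a, rca S a -> f a = id (g a))]).
Proof.
move=> HS HS' Hf.
have IT0 := key_init HS HS' Hf.
have HS'c := HS'; move: HS'c => [_ _ AIS' _ [d [dpos sk]]].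
have Inv0 : InvS S' d (init S') by split; [exact: alg_indep_indep AIS' | exact: sk].
have iT : init (image_seed S S' f) = init S' by [].
have agree : forall ks, all (sex (image_seed S S' f)) ks ->
    mutseq (image_seed S S' f) (init (image_seed S S' f)) ks = mutseq S' (init S') ks /\
    varseq (image_seed S S' f) (init (image_seed S S' f)) ks = varseq S' (init S') ks.
  by move=> ks Hks; rewrite iT; apply: mutseq_agree.
have subT : forall ks, all (sex (image_seed S S' f)) ks -> all (sex S') ks.
  by move=> ks; apply: sub_all => y; apply: sexT_sex.
move: (Hf) => [[Hrca f1 fadd fmul] [CM1 CM2 CM3]].
split.
  split => //; split.
  - split => //.
    move=> a0 Ha0; elim: Ha0 => [z [ks [Hks [y Hy ->]]]| |a b _ Ha _ Hb|a _ Ha|a b _ Ha _ Hb].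
    + apply: rca_var; exists ks; split; first exact: subT.
      exists y; first exact: sxT_sx Hy.
      by have [-> _] := agree ks Hks.
    + exact: rca_one.
    + exact: rca_add.
    + exact: rca_opp.
    + exact: rca_mul.
  - split.
    + by move=> y Hy; left; apply: sexT_sex Hy.
    + by move=> y Hy; left; apply: (@sxT_sx _ _ S S' f); apply/orP; right.
    + move=> ks ks' Hks Hks' Hmap y Hy; split.
        by move=> /(not_int (alg_indep_indep AIS') (sxT_sx Hy)).
      move=> _; rewrite map_id in Hmap.
      have [E1 E2] := agree ks Hks.
      rewrite E2 in Hmap.
      have eks := varseq_inj dpos Inv0 (subT ks Hks) Hks' Hmap.
      by rewrite E1 eks.
move=> Hid; exists f; split => //.
- split; split => //.
  + by move=> a Ha; apply/Hid; exists a.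
  + move=> y Hy; case: (CM1 y Hy) => H; [left | by right].
    by rewrite sexT H /=; apply/asboolP; exists y.
  + move=> y Hy; case: (CM2 y Hy) => H; [left | by right].
    rewrite sxT H /=; apply/asboolP; exists y => //.
    by rewrite /sx Hy orbT.
  + move=> ks ks' Hks Hks' Hmap y Hy.
    have [E1 E2] := agree ks' Hks'.
    rewrite E2 in Hmap.
    have [H1 H2] := CM3 ks ks' Hks (subT ks' Hks') Hmap y Hy.
    split => // HT; rewrite E1; apply: H2; exact: sxT_sx HT.
- by move=> b Hb; apply/Hid.
Qed.
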